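(* Let $(A,B)$ be controllable. For any $N$, any $Q_t\in\mathcal Q$, $R_t\in\mathcal R$ ($0\le t\le N-1$) and $Q_N\in\mathcal P$, the matrices defined by $P_N=Q_N$ and, for $t=N-1,\dots,0$, $P_t=Q_t+A^\top\big(P_{t+1}-P_{t+1}B(R_t+B^\top P_{t+1}B)^{-1}B^\top P_{t+1}\big)A$ satisfy $P_t\in\mathcal P$ for all $0\le t\le N$.
   Context: Fix $\mu_f,\mu_g>0$, $0<l_f,l_g<\infty$. $P^e(Q,R)$ denotes the positive definite solution of the DARE $P=Q+A^\top(P-PB(B^\top PB+R)^{-1}B^\top P)A$. $\mathcal Q=\{Q:\mu_fI_n\le Q\le l_fI_n\}$, $\mathcal R=\{R:\mu_gI_m\le R\le l_gI_m\}$, $\bar P=P^e(l_fI_n,l_gI_m)$, $\underline P=P^e(\mu_fI_n,\mu_gI_m)$, $\mathcal P=\{P:\underline P\le P\le\bar P\}$ (Loewner order). *)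

(* Defs.v *)
From HB Require Import structures.
From mathcomp Require Import all_boot all_order all_algebra.
Set Implicit Arguments. Unset Strict Implicit. Unset Printing Implicit Defensive.
Import Order.TTheory GRing.Theory Num.Theory.
Local Open Scope ring_scope.

Section Defs.
Variable R : rcfType.

Definition qform n (M : 'M[R]_n) (x : 'cV[R]_n) : R := (x^T *m M *m x) 0 0.

Definition psd n (M : 'M[R]_n) : Prop :=
  M^T = M /\ forall x : 'cV[R]_n, 0 <= qform M x.

Definition posdef n (M : 'M[R]_n) : Prop :=
  M^T = M /\ forall x : 'cV[R]_n, x != 0 -> 0 < qform M x.

Definition loewner_le n (M1 M2 : 'M[R]_n) : Prop := psd (M2 - M1).

Definition ctrb_mx n m (A : 'M[R]_n) (B : 'M[R]_(n, m)) :
  'M[R]_(n, \sum_(k < n) (fun _ : 'I_n => m) k) :=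
  @mxrow R n (fun _ : 'I_n => m) n (fun k => A ^+ k *m B).

Definition controllable n m (A : 'M[R]_n) (B : 'M[R]_(n, m)) : Prop :=
  \rank (ctrb_mx A B) = n.

Definition riccati n m (A : 'M[R]_n) (B : 'M[R]_(n, m))
  (Q : 'M[R]_n) (Rw : 'M[R]_m) (P : 'M[R]_n) : 'M[R]_n :=
  Q + A^T *m (P - P *m B *m invmx (Rw + B^T *m P *m B) *m B^T *m P) *m A.

Definition dare_sol n m (A : 'M[R]_n) (B : 'M[R]_(n, m))
  (Q : 'M[R]_n) (Rw : 'M[R]_m) (P : 'M[R]_n) : Prop :=
  posdef P /\ P = riccati A B Q Rw P.

Definition in_interval n (lo hi M : 'M[R]_n) : Prop :=
  loewner_le lo M /\ loewner_le M hi.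

End Defs.

(* Main.v *)
Require Import Defs.
From HB Require Import structures.
From mathcomp Require Import all_boot all_order all_algebra.
From mathcomp Require Import ring lra zify.
Import Order.TTheory GRing.Theory Num.Theory.
Local Open Scope ring_scope.

Section H.
Set Implicit Arguments. Unset Strict Implicit.
Variable R : rcfType.

Lemma trmxD p q (M N : 'M[R]_(p,q)) : (M + N)^T = M^T + N^T.
Proof. exact: linearD. Qed.
Lemma trmxB p q (M N : 'M[R]_(p,q)) : (M - N)^T = M^T - N^T.
Proof. exact: linearB. Qed.

Lemma trmxN p q (M : 'M[R]_(p,q)) : (- M)^T = - M^T.
Proof. exact: linearN. Qed.

Lemma entryD p q (M N : 'M[R]_(p,q)) i j : (M + N) i j = M i j + N i j.
Proof. by rewrite mxE. Qed.
Lemma entryN p q (M : 'M[R]_(p,q)) i j : (- M) i j = - M i j.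
Proof. by rewrite mxE. Qed.

Lemma qformD n (M N : 'M[R]_n) x : qform (M + N) x = qform M x + qform N x.
Proof. by rewrite /qform mulmxDr mulmxDl entryD. Qed.
Lemma qformN n (M : 'M[R]_n) x : qform (- M) x = - qform M x.
Proof. by rewrite /qform mulmxN mulNmx entryN. Qed.
Lemma qformB n (M N : 'M[R]_n) x : qform (M - N) x = qform M x - qform N x.
Proof. by rewrite qformD qformN. Qed.
Lemma qform_conj n k (A : 'M[R]_(k,n)) (M : 'M_k) x :
  qform (A^T *m M *m A) x = qform M (A *m x).
Proof. by rewrite /qform trmx_mul !mulmxA. Qed.
Lemma qform0 n (M : 'M[R]_n) : qform M 0 = 0.
Proof. by rewrite /qform mulmx0 mxE. Qed.

Lemma sym_from n (M1 M2 : 'M[R]_n) :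
  (M2 - M1)^T = M2 - M1 -> M1^T = M1 -> M2^T = M2.
Proof. by move=> h1 h2; rewrite -[M2](subrK M1) trmxD h1 h2. Qed.

Lemma psd_le n (M1 M2 : 'M[R]_n) : psd M1 -> psd (M2 - M1) -> psd M2.
Proof.
move=> [s1 p1] [s2 p2]; split; first exact: sym_from s2 s1.
by move=> x; have := p1 x; have := p2 x; rewrite qformB; lra.
Qed.

Lemma posdef_le n (M1 M2 : 'M[R]_n) : posdef M1 -> psd (M2 - M1) -> posdef M2.
Proof.
move=> [s1 p1] [s2 p2]; split; first exact: sym_from s2 s1.
by move=> x hx; have := p1 x hx; have := p2 x; rewrite qformB; lra.
Qed.

Lemma posdef_psd n (M : 'M[R]_n) : posdef M -> psd M.
Proof.
move=> [s p]; split=> // x; case: (eqVneq x 0) => [->|hx].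
  by rewrite qform0.
exact: ltW (p x hx).
Qed.

Lemma psd_conj n k (A : 'M[R]_(k,n)) (M : 'M_k) : psd M -> psd (A^T *m M *m A).
Proof.
move=> [s p]; split; first by rewrite !trmx_mul trmxK s mulmxA.
by move=> x; rewrite qform_conj.
Qed.

Lemma posdef_scalar n (a : R) : 0 < a -> posdef (a%:M : 'M[R]_n).
Proof.
move=> ha; split; first exact: tr_scalar_mx.
move=> x /matrix0Pn [i [j hij]].
rewrite /qform mul_mx_scalar -scalemxAl mxE.
apply: mulr_gt0 => //.
rewrite mxE (bigD1 i) //= !mxE.
have h1 : 0 < x i 0 * x i 0.
  by rewrite -expr2 lt_def sqr_ge0 sqrf_eq0 andbT; rewrite (ord1 j) in hij.
have h2 : 0 <= \sum_(k < n | k != i) (x^T 0 k * x k 0).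
  by apply: sumr_ge0 => k _; rewrite mxE -expr2 sqr_ge0.
lra.
Qed.

Lemma posdef_unit n (S : 'M[R]_n) : posdef S -> S \in unitmx.
Proof.
move=> [_ HS]; rewrite -row_free_unit -kermx_eq0.
apply/negPn/negP => /matrix0Pn [i [j Hij]].
set w := row i (kermx S).
have wS : w *m S = 0 by rewrite /w -row_mul mulmx_ker row0.
have xnz : w^T != 0.
  by apply/matrix0Pn; exists j; exists ord0; rewrite 2!mxE.
by have := HS _ xnz; rewrite /qform trmxK wS mul0mx mxE ltxx.
Qed.

Lemma key n m (B : 'M[R]_(n,m)) (P : 'M_n) (Rw : 'M_m) (y : 'cV_n) (u : 'cV_m) :
  P^T = P -> Rw^T = Rw -> (Rw + B^T *m P *m B) \in unitmx ->
  qform P (y + B *m u) + qform Rw u =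
  qform (P - P *m B *m invmx (Rw + B^T *m P *m B) *m B^T *m P) y
  + qform (Rw + B^T *m P *m B) (u + invmx (Rw + B^T *m P *m B) *m B^T *m P *m y).
Proof.
move=> sP sR uS.
set S := Rw + B^T *m P *m B.
have sS : S^T = S by rewrite /S trmxD !trmx_mul trmxK sP sR mulmxA.
set Si := invmx S.
have sSi : Si^T = Si by rewrite /Si trmx_inv sS.
have hSSi : forall p (X : 'M_(p,m)), X *m S *m Si = X.
  by move=> p X; rewrite -mulmxA mulmxV // mulmx1.
have hSiS : forall p (X : 'M_(p,m)), X *m Si *m S = X.
  by move=> p X; rewrite -mulmxA mulVmx // mulmx1.
rewrite /qform !trmxD !trmx_mul !trmxK sP sSi.
have hS : S = Rw + B^T *m P *m B by [].
clearbody Si; clearbody S.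
rewrite !mulmxDl !mulmxDr ?mulmxN ?mulNmx !mulmxA !hSSi !hSiS.
rewrite hS !mulmxDl !mulmxDr !mulmxA.
rewrite !(mulmxDl, mulmxDr, mulNmx, mulmxN, mulmxA) !entryD ?entryN.
ring.
Qed.

Lemma ric_sym n m (A : 'M[R]_n) (B : 'M[R]_(n,m)) (Q : 'M[R]_n) (Rw : 'M_m) P :
  Q^T = Q -> Rw^T = Rw -> P^T = P -> (riccati A B Q Rw P)^T = riccati A B Q Rw P.
Proof.
move=> sQ sR sP.
rewrite /riccati !(trmxD, trmxB, trmxN, trmx_mul, trmxK, trmx_inv, sQ, sP, sR, mulmxA) //.
Qed.

Lemma ric_mono n m (A : 'M[R]_n) (B : 'M[R]_(n,m)) (Q1 Q2 : 'M[R]_n)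
  (R1 R2 : 'M_m) (P1 P2 : 'M_n) :
  Q1^T = Q1 -> psd (Q2 - Q1) -> posdef R1 -> psd (R2 - R1) -> psd P1 ->
  psd (P2 - P1) ->
  loewner_le (riccati A B Q1 R1 P1) (riccati A B Q2 R2 P2).
Proof.
move=> sQ1 dQ pR1 dR pP1 dP.
have sR1 := pR1.1; have sP1 := pP1.1.
have sQ2 := sym_from dQ.1 sQ1.
have pR2 : posdef R2 := posdef_le pR1 dR.
have sR2 := pR2.1.
have pP2 : psd P2 := psd_le pP1 dP.
have sP2 := pP2.1.
have pS : forall (Rw : 'M_m) (P : 'M_n), posdef Rw -> psd P ->
    posdef (Rw + B^T *m P *m B).
  move=> Rw P pR pP; apply: (posdef_le pR).
  by rewrite addrC addKr; apply: psd_conj.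
have uS1 := posdef_unit (pS _ _ pR1 pP1).
have uS2 := posdef_unit (pS _ _ pR2 pP2).
have pS1 := posdef_psd (pS _ _ pR1 pP1).
split; first by rewrite trmxB !ric_sym.
move=> x; rewrite qformB subr_ge0 /riccati !qformD !qform_conj.
set y := A *m x.
set u := - (invmx (R2 + B^T *m P2 *m B) *m B^T *m P2 *m y).
have e2 := key y u sP2 sR2 uS2.
rewrite {2}/u addNr qform0 addr0 in e2.
have e1 := key y u sP1 sR1 uS1.
have h1 := pS1.2 (u + invmx (R1 + B^T *m P1 *m B) *m B^T *m P1 *m y).
have hQ := dQ.2 x; rewrite qformB in hQ.
have hP := dP.2 (y + B *m u); rewrite qformB in hP.
have hR := dR.2 u; rewrite qformB in hR.
lra.
Qed.

End H.

Theorem lemma13 (R : rcfType) (n m : nat) (A : 'M[R]_n) (B : 'M[R]_(n, m))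
  (mu_f mu_g l_f l_g : R)
  (Hmuf : 0 < mu_f) (Hmug : 0 < mu_g) (Hlf : 0 < l_f) (Hlg : 0 < l_g)
  (Pbar Plow : 'M[R]_n)
  (Hctrb : controllable A B)
  (HPbar : dare_sol A B (l_f%:M) (l_g%:M) Pbar)
  (HPlow : dare_sol A B (mu_f%:M) (mu_g%:M) Plow)
  (N : nat) (Qs : nat -> 'M[R]_n) (Rs : nat -> 'M[R]_m) (QN : 'M[R]_n)
  (HQ : forall t, (t < N)%N -> in_interval (mu_f%:M) (l_f%:M) (Qs t))
  (HR : forall t, (t < N)%N -> in_interval (mu_g%:M) (l_g%:M) (Rs t))
  (HQN : in_interval Plow Pbar QN)
  (P : nat -> 'M[R]_n)
  (HPN : P N = QN)
  (HPt : forall t, (t < N)%N -> P t = riccati A B (Qs t) (Rs t) (P t.+1)) :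
  forall t, (t <= N)%N -> in_interval Plow Pbar (P t).
Proof.
move=> t Ht.
have [k ->] : exists k, t = (N - k)%N by exists (N - t)%N; rewrite subKn.
elim: k => [|k IH]; first by rewrite subn0 HPN.
case: (leqP N k) => hk.
  by rewrite (_ : (N - k.+1 = N - k)%N) //; lia.
have ht : (N - k.+1 < N)%N by lia.
rewrite HPt // (_ : (N - k.+1).+1 = N - k)%N; last by lia.
have sPlow := HPlow.1.1.
have pPlow := posdef_psd HPlow.1.
have [[sQ1 _] _] := HQ _ ht.
have sQ := sym_from sQ1 (tr_scalar_mx _ _).
split.
  have L := ric_mono A B (tr_scalar_mx _ _) (HQ _ ht).1
    (posdef_scalar _ Hmug) (HR _ ht).1 pPlow IH.1.
  by rewrite -HPlow.2 in L.
have pR := posdef_le (posdef_scalar _ Hmug) (HR _ ht).1.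
have U := ric_mono A B sQ (HQ _ ht).2 pR (HR _ ht).2
  (psd_le pPlow IH.1) IH.2.
by rewrite -HPbar.2 in U.
Qed.
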